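(* Let $G$ be a copious graph on $[n]$ which has a universal vertex. Then $G$ is topologically copious.
   Context: Setup. $G\subseteq\binom{[n]}{2}$ is a simple graph, $n\ge4$, and $G_i$ is the set of neighbours of $i$. A vertex is universal if it is adjacent to all other vertices. The kinematic space $\mathcal K_G\subseteq\mathbb C^{|G|}$ (also in $\mathbb P^{|G|-1}$) is defined by $\sum_{j\in G_i}s_{ij}=0$ for $i\in[n]$, and $\kappa(G)$ is its codimension. $\mathcal H=\bigcup_{i<j}\{x_i=x_j\}$. $\mathcal M_{0,n}$ is the moduli space of $n$ distinct points on $\mathbb P^1$ modulo $\mathrm{PGL}(2)$ (action $x_i\mapsto(ax_i+b)/(cx_i+d)$). Copious. The scattering correspondence is $$\mathcal V_G=\{(s,x)\in\mathbb P^{|G|-1}\times(\mathbb P^{n-1}\setminus\mathcal H): s\in\mathcal K_G,\ \textstyle\sum_{j\in G_i}s_{ij}/(x_i-x_j)=0\ \forall i\},$$ with projections $\mathcal K_G\leftarrow\mathcal V_G\to\mathcal M_{0,n}$ (an $x$-solution orbit is a point of $\mathcal M_{0,n}$). $G$ is copious if $\mathcal V_G\to\mathcal M_{0,n}$ is dominant and the generic fiber of $\mathcal V_G\to\mathcal K_G$ has dimension two in $\mathbb P^{n-1}$ (modulo $\mathrm{PGL}(2)$ it is finite-to-one). Topologically copious. The kinematic lattice $\Lambda_G=\mathcal K_G\cap\mathbb Z^{|G|}$ has rank $r=|G|-\kappa(G)$. For $u\in\Lambda_G$ set $\tilde u(x)=\prod_{ij\in G,\,i<j}(x_i-x_j)^{u_{ij}}$,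 a $\mathrm{PGL}(2)$-invariant regular function on $\mathcal M_{0,n}$. For a $\mathbb Z$-basis $u_1,\dots,u_r$, $\Phi_G:\mathcal M_{0,n}\to(\mathbb C^* )^r$ is $x\mapsto(\tilde u_k(x))_k$. $G$ is topologically copious if $\Phi_G$ is an embedding (an isomorphism onto its image). *)

(* Defs.v *)
(* complex numbers are R[i] = complex R for R : realType
   (any realType is isomorphic to the real numbers, so R[i] is C). *)
From HB Require Import structures.
From mathcomp Require Import all_boot all_order all_algebra.
From mathcomp Require Import reals complex.
From mathcomp Require Import mpoly.

Set Implicit Arguments.
Unset Strict Implicit.
Unset Printing Implicit Defensive.
Import Order.TTheory GRing.Theory Num.Theory.
Local Open Scope ring_scope.

Section Defs.
Variable R : realType.
Local Notation C := (complex R).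
Variable n : nat.
(* simple graph on [n] : symmetric irreflexive adjacency relation;
   the edge ij (i<j) carries the coordinate s i j of an n x n matrix
   (entries outside edges {i<j, adj i j} are required to vanish) *)
Variable adj : rel 'I_n.

Definition is_edge (i j : 'I_n) : bool := (i < j)%N && adj i j.

Definition sv {T} (s : 'M[T]_n) (i j : 'I_n) : T :=
  if (i < j)%N then s i j else s j i.

Definition in_K (s : 'M[C]_n) : Prop :=
  (forall i j, s i j != 0 -> is_edge i j) /\
  (forall i : 'I_n, \sum_(j | adj i j) sv s i j = 0).

Definition in_Lambda (u : 'M[int]_n) : Prop :=
  (forall i j, u i j != 0 -> is_edge i j) /\
  (forall i : 'I_n, \sum_(j | adj i j) sv u i j = 0).

(* x : 'I_n -> C with pairwise distinct coordinates (x in the complement of H,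
   in an affine chart of P^{n-1}) *)
Definition conf (x : 'I_n -> C) : Prop := injective x.

Definition scat (s : 'M[C]_n) (x : 'I_n -> C) : Prop :=
  forall i : 'I_n, \sum_(j | adj i j) sv s i j / (x i - x j) = 0.

(* x and y define the same point of M_{0,n} (same PGL(2)-orbit) *)
Definition same_orbit (x y : 'I_n -> C) : Prop :=
  exists a b c d : C, a * d - b * c != 0 /\
    forall i, c * x i + d != 0 /\ y i = (a * x i + b) / (c * x i + d).

Definition matvec (s : 'M[C]_n) : 'I_(n * n) -> C := fun k => mxvec s 0 k.

(* V_G -> M_{0,n} is dominant: the image is Zariski dense, i.e. no nonzero
   polynomial vanishes on (the preimage in configuration space of) the image *)
Definition dominant_to_M : Prop :=
  forall f : {mpoly C[n]},
    (forall x, conf x -> (exists s, s != 0 /\ in_K s /\ scat s x) ->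
       f.@[x] = 0) -> f = 0.

(* the fibre of V_G -> K_G over s is nonempty and consists of finitely many
   PGL(2)-orbits (dimension two in P^{n-1}) *)
Definition fibre_finite (s : 'M[C]_n) : Prop :=
  exists (k : nat) (X : 'I_k -> ('I_n -> C)),
    (0 < k)%N /\ (forall l, conf (X l) /\ scat s (X l)) /\
    forall x, conf x -> scat s x -> exists l, same_orbit (X l) x.

(* the generic fibre: the property holds on a nonempty Zariski open subset
   {f <> 0} of K_G *)
Definition generic_fibre_finite : Prop :=
  exists f : {mpoly C[(n * n)]},
    (exists s, in_K s /\ f.@[(matvec s)] != 0) /\
    forall s, in_K s -> s != 0 -> f.@[(matvec s)] != 0 ->
      fibre_finite s.

Definition copious : Prop := dominant_to_M /\ generic_fibre_finite.

Definition utilde (u : 'M[int]_n) (x : 'I_n -> C) : C :=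
  \prod_(i : 'I_n) \prod_(j : 'I_n | is_edge i j) (x i - x j) ^ (u i j).

Definition lattice_basis (r : nat) (U : 'I_r -> 'M[int]_n) : Prop :=
  (forall k, in_Lambda (U k)) /\
  forall u, in_Lambda u ->
    exists! c : 'I_r -> int, u = \sum_(k < r) c k *: U k.

Definition cross_ratio (x : 'I_n -> C) (i j k l : 'I_n) : C :=
  (x i - x k) * (x j - x l) / ((x i - x l) * (x j - x k)).

Definition distinct4 (i j k l : 'I_n) : bool :=
  [&& i != j, i != k, i != l, j != k, j != l & k != l].

(* Phi : M_{0,n} -> (C^* )^r is an isomorphism onto its image:
   injective on M_{0,n}, and the inverse map (image -> M_{0,n}) is regular,
   i.e. the cross-ratios (generators of the coordinate ring of M_{0,n}) are,
   near every point of the image, quotients P/Q of polynomials in the torus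
   coordinates with Q nonvanishing there *)
Definition embedding_M (r : nat) (Phi : ('I_n -> C) -> ('I_r -> C)) : Prop :=
  (forall x y, conf x -> conf y -> Phi x = Phi y -> same_orbit x y) /\
  (forall x0, conf x0 ->
     exists (Q : {mpoly C[r]})
            (P : 'I_n -> 'I_n -> 'I_n -> 'I_n -> {mpoly C[r]}),
       Q.@[(Phi x0)] != 0 /\
       forall x, conf x -> Q.@[(Phi x)] != 0 ->
         forall i j k l, distinct4 i j k l ->
           cross_ratio x i j k l * Q.@[(Phi x)] =
           (P i j k l).@[(Phi x)]).

Definition Phi_G (r : nat) (U : 'I_r -> 'M[int]_n) (x : 'I_n -> C) : 'I_r -> C :=
  fun k => utilde (U k) x.

Definition topologically_copious : Prop :=
  forall (r : nat) (U : 'I_r -> 'M[int]_n),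
    lattice_basis U -> embedding_M (Phi_G U).

Definition universal_vertex (v : 'I_n) : Prop :=
  forall w, w != v -> adj v w.

End Defs.

(* Main.v *)
Require Import Defs.
From HB Require Import structures.
From mathcomp Require Import all_boot all_order all_algebra.
From mathcomp Require Import reals complex mpoly ring.
From Stdlib Require Import Classical.
Set Implicit Arguments. Unset Strict Implicit. Unset Printing Implicit Defensive.
Import Order.TTheory GRing.Theory Num.Theory.
Local Open Scope ring_scope.

Ltac nz := repeat (apply/andP; split); try assumption.

Section Gen.
Variable R : realType.
Local Notation C := (complex R).

Lemma fresh (L : seq C) : exists t : C, t != 0 /\ t \notin L.
Proof.
pose s := [seq (i.+1)%:R : C | i <- iota 0 (size L).+1].
have us : uniq s.
  rewrite map_inj_uniq ?iota_uniq // => i j /eqP; rewrite eqr_nat => /eqP; by case.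
case: (boolP (all (mem L) s)) => [/allP sub|].
  have := uniq_leq_size us sub; by rewrite size_map size_iota ltnn.
move/allPn=> [t /mapP [i _ ->] tL]; exists (i.+1)%:R; split => //.
by rewrite pnatr_eq0.
Qed.

Variable n : nat.
Lemma cr_inv (x y : 'I_n -> C) i j k l : same_orbit x y -> conf x -> distinct4 i j k l ->
  cross_ratio y i j k l = cross_ratio x i j k l.
Proof.
move=> [a [b [c [d [det H]]]]] cx /andP[ij /andP[ik /andP[il /andP[jk /andP[jl kl]]]]].
have xne p q : p != q -> x p - x q != 0.
  by move=> pq; rewrite subr_eq0; apply: contra pq => /eqP /cx ->.
have key p q : y p - y q = (a*d - b*c) * (x p - x q) / ((c * x p + d) * (c * x q + d)).
  have [hp ->] := H p; have [hq ->] := H q. by field; apply/andP.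
rewrite /cross_ratio !key.
have := xne _ _ ik; have := xne _ _ il; have := xne _ _ jk; have := xne _ _ jl.
have [hi _] := H i; have [hj _] := H j; have [hk _] := H k; have [hl _] := H l.
move=> *; field; by repeat (apply/andP; split).
Qed.

Lemma sv_sym T (s : 'M[T]_n) i j : sv s i j = sv s j i.
Proof.
rewrite /sv; case: ltngtP => // h.
by have -> : i = j by apply: val_inj.
Qed.

Variable adj : rel 'I_n.
Hypothesis adj_sym : forall i j, adj i j = adj j i.

Lemma in_KZ (s : 'M[C]_n) t : in_K adj s -> in_K adj (t *: s).
Proof.
move=> [supp sums]; split.
  move=> i j; rewrite mxE => h; apply: supp; apply: contraNneq h => ->; by rewrite mulr0.
move=> i; have e j : sv (t *: s) i j = t * sv s i j by rewrite /sv; case: ifP; rewrite mxE.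
by rewrite (eq_bigr _ (fun j _ => e j)) -mulr_sumr sums mulr0.
Qed.

Lemma exists_good_s : copious R adj ->
  exists s, s != 0 /\ in_K adj s /\ @fibre_finite R n adj s.
Proof.
move=> [dom [f [[s0 [Ks0 fs0]] Hf]]].
have [s1 [s1n0 Ks1]] : exists s1 : 'M[C]_n, s1 != 0 /\ in_K adj s1.
  apply: NNPP => H; have h1 := dom 1; have : (1 : {mpoly C[n]}) != 0 := oner_neq0 _; move/negP; apply; apply/eqP; apply: h1.
  by move=> x _ [s [sn0 [Ks _]]]; exfalso; apply: H; exists s.
case: (eqVneq s0 0) => [s00|s0n0]; last by exists s0; split=> //; split=>//; apply: Hf.
subst s0.
pose w := matvec s1.
pose p : {poly C} := \sum_(m <- msupp f) f@_m *: \prod_(i < n*n) ((w i)%:P * 'X)^+ (m i).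
have pE t : p.[t] = f.@[matvec (t *: s1)].
  rewrite mevalE /p horner_sum; apply: eq_bigr => m _.
  rewrite hornerZ horner_prod; congr (_ * _); apply: eq_bigr => i _.
  by rewrite horner_exp hornerM hornerC hornerX /matvec /w linearZ /= mxE mulrC.
have p0 : p.[0] != 0 by rewrite pE scale0r.
have pn0 : p != 0 by apply: contra p0 => /eqP ->; rewrite horner0.
pose rs := [seq (i.+1)%:R : C | i <- iota 0 (size p)].
have urs : uniq rs.
  rewrite map_inj_uniq ?iota_uniq // => i j /eqP; rewrite eqr_nat => /eqP; by case.
case: (boolP (all (root p) rs)) => [allr|].
  have := max_poly_roots pn0 allr urs; by rewrite size_map size_iota ltnn.
move/allPn=> [t /mapP [i _ ->] tr].
have t0 : (i.+1)%:R != 0 :> C by rewrite pnatr_eq0.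
exists ((i.+1)%:R *: s1); split; first by rewrite scaler_eq0 negb_or t0.
split; first exact: in_KZ.
apply: Hf; first exact: in_KZ.
  by rewrite scaler_eq0 negb_or t0.
by rewrite -pE.
Qed.

Variable v : 'I_n.
Hypothesis hv : universal_vertex adj v.

Section Split.
Variable S : {set 'I_n}.
Hypothesis vS : v \notin S.
Hypothesis clS : forall i j, adj i j -> i != v -> j != v -> (i \in S) = (j \in S).

Lemma antisym (s : 'M[C]_n) (x : 'I_n -> C) :
  \sum_(i in S) \sum_(j | adj i j && (j \in S)) sv s i j / (x i - x j) = 0.
Proof.
set A := LHS.
pose F i j := if [&& i \in S, j \in S & adj i j] then sv s i j / (x i - x j) else 0.
have eA : A = \sum_i \sum_j F i j.
  rewrite /A big_mkcond; apply: eq_bigr => i _ /=.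
  case: (boolP (i \in S)) => iS.
    rewrite big_mkcond; apply: eq_bigr => j _; by rewrite /F iS /= andbC.
  by rewrite big1 // => j _; rewrite /F (negbTE iS).
have AN : A = - A.
  rewrite {1}eA exchange_big /= eA -sumrN; apply: eq_bigr => j _.
  rewrite -sumrN; apply: eq_bigr => i _; rewrite /F.
  rewrite [X in if X then _ else _](_ : _ = [&& j \in S, i \in S & adj j i]); last first.
    by rewrite adj_sym; case: (i \in S); case: (j \in S).
  case: ifP => _; last by rewrite oppr0.
  by rewrite [sv s i j]sv_sym -[x i - x j]opprB invrN mulrN.
have : A *+ 2 == 0 by rewrite mulr2n {2}AN subrr.
by rewrite mulrn_eq0 /= => /eqP.
Qed.

Definition xt (x : 'I_n -> C) (t : C) (i : 'I_n) :=
  if i \in S then x v + t * (x i - x v) else x i.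

Lemma scat_xt (s : 'M[C]_n) x t : t != 0 -> conf x -> scat adj s x -> scat adj s (xt x t).
Proof.
move=> t0 cx sc i.
have xv : xt x t v = x v by rewrite /xt (negbTE vS).
have notS_v j i' : i' \in S -> adj i' j -> j \notin S -> j = v.
  move=> iS aij jS; apply/eqP; apply: contraNT jS => jv.
  have iv : i' != v by apply: contraNneq vS => <-.
  by rewrite -(clS aij iv jv).
case: (boolP (i \in S)) => iS.
  have iv : i != v by apply: contraNneq vS => <-.
  transitivity (t^-1 * \sum_(j | adj i j) sv s i j / (x i - x j)); last by rewrite sc mulr0.
  rewrite mulr_sumr; apply: eq_bigr => j aij /=.
  have -> : xt x t i - xt x t j = t * (x i - x j).
    rewrite /xt iS; case: (boolP (j \in S)) => jS; first by ring.
    by rewrite (notS_v _ _ iS aij jS); ring.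
  by rewrite invfM mulrCA.
case: (eqVneq i v) => [->|iv]; last first.
  rewrite -[RHS](sc i); apply: eq_bigr => j aij; rewrite /xt (negbTE iS).
  case: (boolP (j \in S)) => // jS.
  case: (eqVneq j v) => [jv|jv]; first by move: jS; rewrite jv (negbTE vS).
  by move: iS; rewrite (clS aij iv jv) jS.
pose P := \sum_(j | adj v j && (j \in S)) sv s v j / (x v - x j).
have P0 : P = 0.
  have sumE : \sum_(i in S) \sum_(j | adj i j) sv s i j / (x i - x j) = 0.
    by rewrite big1 // => i0 _; exact: sc i0.
  have e2 : forall i0, i0 \in S -> \sum_(j | adj i0 j) sv s i0 j / (x i0 - x j) =
     \sum_(j | adj i0 j && (j \in S)) sv s i0 j / (x i0 - x j) + sv s i0 v / (x i0 - x v).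
    move=> i0 i0S; rewrite (bigID (fun j => j \in S)) /=; congr (_ + _).
    have i0v : i0 != v by apply: contraNneq vS => <-.
    apply: big_pred1 => j /=; apply/andP/eqP.
      by move=> [aij jS]; apply: notS_v i0S aij jS.
    by move=> ->; split => //; rewrite adj_sym; apply: hv.
  rewrite (eq_bigr _ e2) big_split /= antisym add0r in sumE.
  rewrite /P -[RHS]oppr0 -[X in - X]sumE -sumrN.
  rewrite (eq_bigl (fun j => j \in S)); last first.
    move=> j /=; case: (boolP (j \in S)) => jS; rewrite ?andbF ?andbT //.
    by apply: hv; apply: contraNneq vS => <-.
  apply: eq_bigr => j _; by rewrite sv_sym -opprB invrN mulrN.
have E := sc v.
rewrite (bigID (fun j => j \in S)) /= in E.
rewrite (bigID (fun j => j \in S)) /=.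
have -> : \sum_(j | adj v j && (j \in S)) sv s v j / (xt x t v - xt x t j) = t^-1 * P.
  rewrite /P mulr_sumr; apply: eq_bigr => j /andP[_ jS].
  rewrite xv /xt jS.
  have -> : x v - (x v + t * (x j - x v)) = t * (x v - x j) by ring.
  by rewrite invfM mulrCA.
rewrite -/P P0 mulr0 add0r; rewrite -/P P0 add0r in E; rewrite -[RHS]E.
by apply: eq_bigr => j /andP[_ jS]; rewrite xv /xt (negbTE jS).
Qed.

Lemma no_split a b1 b2 : copious R adj -> a \in S -> b1 \notin S -> b2 \notin S ->
  b1 != v -> b2 != v -> b1 != b2 -> False.
Proof.
move=> cop aS b1S b2S b1v b2v b12.
have [s [sn0 [Ks [k [X [k0 [HX Hall]]]]]]] := exists_good_s cop.
pose x := X (Ordinal k0). have [cx sx] := HX (Ordinal k0).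
have av : a != v by apply: contraNneq vS => <-.
have ab1 : a != b1 by apply: contraNneq b1S => <-.
have ab2 : a != b2 by apply: contraNneq b2S => <-.
have xne p q : p != q -> x p - x q != 0.
  by move=> pq; rewrite subr_eq0; apply: contra pq => /eqP /cx ->.
pose V := [seq cross_ratio (X l) a b1 b2 v | l <- enum 'I_k].
pose al := x a - x v. pose kap := (x v - x b2)/al. pose rho := (x b1 - x v)/(x b1 - x b2).
pose F w := kap / (w / rho - 1).
pose L := [seq (x j - x v)/(x i - x v) | i <- enum 'I_n, j <- enum 'I_n] ++ map F V.
have [t [t0 tL]] := fresh L.
rewrite mem_cat negb_or in tL; case/andP: tL => tL1 tL2.
have bad i j : i \in S -> j \notin S -> x v + t * (x i - x v) = x j -> False.
  move=> iS jS E; move/negP: tL1; apply; apply/allpairsP; exists (i, j).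
  split; rewrite ?mem_enum //=.
  have iv : i != v by apply: contraNneq vS => <-.
  rewrite -E; field; exact: xne.
have cxt : conf (xt x t).
  move=> i j; rewrite /xt.
  case: (boolP (i \in S)) => iS; case: (boolP (j \in S)) => jS.
  - by move=> /addrI /(mulfI t0) /addIr /cx.
  - by move=> E; exfalso; exact: bad iS jS E.
  - by move=> E; exfalso; exact: bad jS iS (esym E).
  - exact: cx.
have sxt := scat_xt t0 cx sx.
have [l ol] := Hall _ cxt sxt.
have [cXl _] := HX l.
have d4 : distinct4 a b1 b2 v by rewrite /distinct4 ab1 ab2 av b12 b1v b2v.
have := cr_inv ol cXl d4.
have CRt : cross_ratio (xt x t) a b1 b2 v =
   (x v + t * al - x b2) * (x b1 - x v) / ((t * al) * (x b1 - x b2)).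
  rewrite /cross_ratio /xt aS (negbTE b1S) (negbTE b2S) (negbTE vS).
  by congr (_ * _ / (_ * _)); rewrite /al; ring.
have kap0 : kap != 0 by rewrite /kap mulf_neq0 ?invr_eq0 ?xne // eq_sym.
have FE : F (cross_ratio (xt x t) a b1 b2 v) = t.
  have e1 : cross_ratio (xt x t) a b1 b2 v / rho - 1 = kap / t.
    rewrite CRt /rho /kap /al; field.
    by rewrite t0 !xne // eq_sym.
  by rewrite /F e1; field; rewrite t0 kap0.
move=> CRe; move/negP: tL2; apply; rewrite -FE CRe; apply: map_f.
by apply: map_f; rewrite mem_enum.
Qed.

End Split.

Definition e' := [rel i j | [&& adj i j, i != v & j != v]].

Lemma exists_other (n4 : (4 <= n)%N) (p q r : 'I_n) : exists w, w \notin [:: p; q; r].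
Proof.
case: (boolP [exists w, w \notin [:: p; q; r]]) => [/existsP //|/existsPn H].
have : (#|'I_n| <= #|[:: p; q; r]|)%N.
  by apply: subset_leq_card; apply/subsetP => w _; have := H w; rewrite negbK.
rewrite card_ord => /leq_trans /(_ (card_size _)) /= h.
by have := leq_trans n4 h.
Qed.

Lemma conn : copious R adj -> (4 <= n)%N -> forall c i, c != v -> i != v -> connect e' c i.
Proof.
move=> cop n4 c i cv iv; apply/negPn/negP => nci.
pose S := [set j | (j != v) && connect e' c j].
have vS : v \notin S by rewrite inE eqxx.
have cS : c \in S by rewrite inE cv connect0.
have iS : i \notin S by rewrite inE iv.
have clS : forall p q, adj p q -> p != v -> q != v -> (p \in S) = (q \in S).
  move=> p q apq pv qv; rewrite !inE pv qv /=; apply/idP/idP => h.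
    by apply: connect_trans h (connect1 _); rewrite /= apq pv qv.
  by apply: connect_trans h (connect1 _); rewrite /= adj_sym apq pv qv.
pose T := [set j | (j != v) && (j \notin S)].
have vT : v \notin T by rewrite inE eqxx.
have clT : forall p q, adj p q -> p != v -> q != v -> (p \in T) = (q \in T).
  by move=> p q apq pv qv; rewrite [p \in T]inE [q \in T]inE pv qv /= (clS _ _ apq pv qv).
have [w] := exists_other n4 v c i.
rewrite !inE !negb_or => /and3P[wv wc wi].
case: (boolP (w \in S)) => wS.
  have cT : c \notin T by rewrite inE cS andbF.
  have wT : w \notin T by rewrite inE wS andbF.
  have iT : i \in T by rewrite inE iv iS.
  have cw : c != w by rewrite eq_sym.
  exact: (@no_split T vT clT i c w cop iT cT wT cv wv cw).
have iw : i != w by rewrite eq_sym.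
exact: (@no_split S vS clS c i w cop cS iS wS iv wv iw).
Qed.

End Gen.


Section Util.
Variable R : realType.
Local Notation C := (complex R).
Variable n : nat.
Variable adj : rel 'I_n.

Lemma conf_ne (x : 'I_n -> C) p q : conf x -> p != q -> x p - x q != 0.
Proof. by move=> cx pq; rewrite subr_eq0; apply: contra pq => /eqP /cx ->. Qed.

Lemma utilde_ne0 u (x : 'I_n -> C) : conf x -> utilde adj u x != 0.
Proof.
move=> cx; rewrite /utilde; apply/prodf_neq0 => i _; apply/prodf_neq0 => j /andP[ij _].
apply: expfz_neq0; apply: conf_ne => //; apply/eqP => eij; by rewrite eij ltnn in ij.
Qed.

Lemma utildeD u w (x : 'I_n -> C) : conf x ->
  utilde adj (u + w) x = utilde adj u x * utilde adj w x.
Proof.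
move=> cx; rewrite /utilde -big_split; apply: eq_bigr => i _.
rewrite -big_split; apply: eq_bigr => j /andP[ij _]; rewrite mxE expfzDr //.
apply: conf_ne => //; apply/eqP => eij; by rewrite eij ltnn in ij.
Qed.

Lemma utilde0 (x : 'I_n -> C) : utilde adj 0 x = 1.
Proof. by rewrite /utilde big1 // => i _; rewrite big1 // => j _; rewrite mxE expr0z. Qed.

Lemma utildeZ (z : int) u (x : 'I_n -> C) : utilde adj (z *: u) x = utilde adj u x ^ z.
Proof.
rewrite /utilde (big_morph (fun a : C => a ^ z) (fun a b => expfzMl a b z) (exp1rz _ z)).
apply: eq_bigr => i _.
rewrite (big_morph (fun a : C => a ^ z) (fun a b => expfzMl a b z) (exp1rz _ z)).
by apply: eq_bigr => j _; rewrite mxE exprz_exp mulrC.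
Qed.

Lemma utilde_sum r (M : 'I_r -> 'M[int]_n) (x : 'I_n -> C) : conf x ->
  utilde adj (\sum_(k < r) M k) x = \prod_(k < r) utilde adj (M k) x.
Proof.
move=> cx.
exact: (big_morph (fun u => utilde adj u x) (fun a b => utildeD a b cx) (utilde0 x)).
Qed.

Lemma utildeB u w (x : 'I_n -> C) : conf x ->
  utilde adj (u - w) x = utilde adj u x / utilde adj w x.
Proof.
move=> cx; have := utildeD (u - w) w cx; rewrite subrK => ->.
by rewrite mulfK // utilde_ne0.
Qed.

Lemma utilde_delta p q (x : 'I_n -> C) : is_edge adj p q ->
  utilde adj (delta_mx p q) x = x p - x q.
Proof.
move=> epq; rewrite /utilde (bigD1 p) //= (bigD1 q) //=.
rewrite [X in _ * X * _]big1 => [|j /andP[_ jq]]; last first.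
  by rewrite mxE eqxx (negbTE jq) /= expr0z.
rewrite [X in _ * X]big1 => [|i ip]; last first.
  by rewrite big1 // => j _; rewrite mxE (negbTE ip) /= expr0z.
by rewrite mxE !eqxx /= expr1z !mulr1.
Qed.

End Util.

Section Lat.
Variable n : nat.
Variable adj : rel 'I_n.
Hypothesis adj_sym : forall i j, adj i j = adj j i.

Definition Em (p q : 'I_n) : 'M[int]_n := if (p < q)%N then delta_mx p q else delta_mx q p.
Definition supp (u : 'M[int]_n) := forall i j, u i j != 0 -> is_edge adj i j.
Definition deg (u : 'M[int]_n) i := \sum_(j | adj i j) sv u i j.

Lemma suppD u w : supp u -> supp w -> supp (u + w).
Proof.
move=> su sw i j; rewrite mxE => h; case: (eqVneq (u i j) 0) => [e|]; last exact: su.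
by apply: sw; move: h; rewrite e add0r.
Qed.

Lemma suppN u : supp u -> supp (- u).
Proof. by move=> su i j; rewrite mxE oppr_eq0; exact: su. Qed.

Lemma degD u w i : deg (u + w) i = deg u i + deg w i.
Proof.
rewrite /deg -big_split; apply: eq_bigr => j _; by rewrite /sv; case: ifP; rewrite mxE.
Qed.

Lemma degN u i : deg (- u) i = - deg u i.
Proof.
rewrite /deg -sumrN; apply: eq_bigr => j _; by rewrite /sv; case: ifP; rewrite mxE.
Qed.

Lemma sv_delta (p q i j : 'I_n) : (p < q)%N ->
  sv (delta_mx p q : 'M[int]_n) i j = (((i == p) && (j == q)) || ((i == q) && (j == p)))%:R.
Proof.
move=> pq; rewrite /sv; case: ifP => ij; rewrite mxE.
  have -> : (i == q) && (j == p) = false.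
    apply/negbTE/negP => /andP[/eqP iq /eqP jp]; move: ij; rewrite iq jp => qp.
    by have := ltn_trans pq qp; rewrite ltnn.
  by rewrite orbF.
have -> : (i == p) && (j == q) = false.
  by apply/negbTE/negP => /andP[/eqP ip /eqP jq]; move: ij; rewrite ip jq pq.
by rewrite /= andbC.
Qed.

Lemma neq_ord (p q : 'I_n) : p != q -> (p < q)%N || (q < p)%N.
Proof. by move=> pq; case: ltngtP => // /val_inj h; rewrite h eqxx in pq. Qed.

Lemma sv_Em (p q i j : 'I_n) : p != q ->
  sv (Em p q) i j = (((i == p) && (j == q)) || ((i == q) && (j == p)))%:R.
Proof.
move=> pq; rewrite /Em; case: ifP => h; first exact: sv_delta.
have qp : (q < p)%N by move: (neq_ord pq); rewrite h.
by rewrite sv_delta // orbC.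
Qed.

Lemma supp_Em p q : adj p q -> p != q -> supp (Em p q).
Proof.
move=> apq pq i j; rewrite /Em; case: ifP => h; rewrite mxE;
  case: (boolP ((i == _) && (j == _))) => //= /andP[/eqP -> /eqP ->] _.
  by rewrite /is_edge h apq.
have qp : (q < p)%N by move: (neq_ord pq); rewrite h.
by rewrite /is_edge qp adj_sym apq.
Qed.

Lemma deg_Em p q i : adj p q -> p != q -> deg (Em p q) i = (i == p)%:R + (i == q)%:R.
Proof.
move=> apq pq; rewrite /deg (eq_bigr _ (fun j _ => sv_Em i j pq)).
case: (eqVneq i p) => [->|ip].
  rewrite (negbTE pq) addr0 (bigD1 q) //= !eqxx /= big1 ?addr0 // => j /andP[_ jq].
  by rewrite (negbTE jq).
case: (eqVneq i q) => [->|iq].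
  rewrite (bigD1 p) /=; last by rewrite adj_sym.
  rewrite eqxx big1 ?add0r ?addr0 // => j /andP[_ jp].
  by rewrite (negbTE jp).
by rewrite big1 ?addr0 // => j _.
Qed.

Variable v : 'I_n.
Hypothesis hv : universal_vertex adj v.

Definition hm a b := Em a b - Em a v - Em b v.

Lemma in_Lambda_h a b c d : adj a b -> a != v -> b != v -> a != b ->
  adj c d -> c != v -> d != v -> c != d -> in_Lambda adj (hm a b - hm c d).
Proof.
move=> aab av bv ab acd cv dv cd.
have avj w : w != v -> adj w v by move=> wv; rewrite adj_sym; exact: hv.
have sh p q : adj p q -> p != v -> q != v -> p != q -> supp (hm p q).
  move=> apq pv qv pq; rewrite /hm.
  apply: suppD; [apply: suppD; [|apply: suppN]|apply: suppN]; apply: supp_Em => //; exact: avj.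
have dh p q i : adj p q -> p != v -> q != v -> p != q ->
    deg (hm p q) i = - ((i == v)%:R + (i == v)%:R).
  move=> apq pv qv pq; rewrite /hm !degD !degN !deg_Em //; try apply: avj => //.
  ring.
split; first by apply: suppD; [exact: sh|]; apply: suppN; exact: sh.
by move=> i; rewrite -/(deg _ i) degD degN (dh a b) // (dh c d) // subrr.
Qed.

End Lat.


Section PRsec.
Variable R : realType.
Local Notation C := (complex R).
Variable n : nat.
Variable adj : rel 'I_n.
Variables (r : nat) (U : 'I_r -> 'M[int]_n).

Local Notation Phi := (Phi_G adj U).

Definition PR (F : ('I_n -> C) -> C) := exists A B : {mpoly C[r]},
  forall x, conf x -> B.@[Phi x] != 0 /\ F x = A.@[Phi x] / B.@[Phi x].

Lemma PR_ext F G : (forall x, conf x -> F x = G x) -> PR F -> PR G.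
Proof.
move=> e [A [B H]]; exists A, B => x cx; have [b e1] := H x cx.
by split => //; rewrite -e.
Qed.

Lemma PR_C c : PR (fun _ => c).
Proof.
exists c%:MP, 1 => x _; rewrite mevalC meval1 divr1; split => //; exact: oner_neq0.
Qed.

Lemma PR_X k : PR (fun x => Phi x k).
Proof.
exists 'X_k, 1 => x _; rewrite mevalXU meval1 divr1; split => //; exact: oner_neq0.
Qed.

Lemma PR_add F G : PR F -> PR G -> PR (fun x => F x + G x).
Proof.
move=> [A1 [B1 H1]] [A2 [B2 H2]]; exists (A1 * B2 + A2 * B1), (B1 * B2) => x cx.
have [b1 e1] := H1 x cx; have [b2 e2] := H2 x cx.
rewrite mevalD !mevalM mulf_neq0 //; split => //; rewrite e1 e2; field; nz.
Qed.

Lemma PR_opp F : PR F -> PR (fun x => - F x).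
Proof.
move=> [A [B H]]; exists (- A), B => x cx; have [b e] := H x cx.
by rewrite mevalN e mulNr.
Qed.

Lemma PR_mul F G : PR F -> PR G -> PR (fun x => F x * G x).
Proof.
move=> [A1 [B1 H1]] [A2 [B2 H2]]; exists (A1 * A2), (B1 * B2) => x cx.
have [b1 e1] := H1 x cx; have [b2 e2] := H2 x cx.
rewrite !mevalM mulf_neq0 //; split => //; rewrite e1 e2; field; nz.
Qed.

Lemma PR_inv F : PR F -> (forall x, conf x -> F x != 0) -> PR (fun x => (F x)^-1).
Proof.
move=> [A [B H]] Fn0; exists B, A => x cx; have [b e] := H x cx.
have a : A.@[Phi x] != 0.
  by apply: contra (Fn0 x cx) => /eqP a0; rewrite e a0 mul0r.
by split => //; rewrite e invf_div.
Qed.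

Lemma PR_div F G : PR F -> PR G -> (forall x, conf x -> G x != 0) -> PR (fun x => F x / G x).
Proof. by move=> pf pg gn; apply: PR_mul => //; exact: PR_inv. Qed.

Lemma PR_prod (G : 'I_r -> ('I_n -> C) -> C) : (forall k, PR (G k)) ->
  PR (fun x => \prod_(k < r) G k x).
Proof.
move=> H.
suff: forall s : seq 'I_r, PR (fun x => \prod_(k <- s) G k x) by apply.
elim => [|k s IH]; first by apply: PR_ext (PR_C 1) => x _; rewrite big_nil.
by apply: PR_ext (PR_mul (H k) IH) => x _; rewrite big_cons.
Qed.

Lemma PR_expz F : PR F -> (forall x, conf x -> F x != 0) -> forall z : int, PR (fun x => F x ^ z).
Proof.
move=> pF Fn0.
have pos m : PR (fun x => F x ^+ m).
  elim: m => [|m IH]; first by apply: PR_ext (PR_C 1) => x _; rewrite expr0.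
  by apply: PR_ext (PR_mul pF IH) => x _; rewrite exprS.
case=> m; first exact: pos.
have pn : forall x, conf x -> F x ^+ m.+1 != 0 by move=> x cx; apply: expf_neq0; exact: Fn0.
by apply: PR_ext (PR_inv (pos m.+1) pn) => x _.
Qed.

Lemma PR_utilde u : lattice_basis adj U -> in_Lambda adj u -> PR (utilde adj u).
Proof.
move=> [_ hU] hu; have [c [uE _]] := hU u hu.
have : PR (fun x => \prod_(k < r) Phi x k ^ c k).
  apply: PR_prod => k; apply: PR_expz; first exact: PR_X.
  by move=> x cx; rewrite /Phi_G utilde_ne0.
apply: PR_ext => x cx; rewrite uE utilde_sum //; apply: eq_bigr => k _.
by rewrite utildeZ.
Qed.

Lemma PR_eq F x y : PR F -> conf x -> conf y -> Phi x = Phi y -> F x = F y.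
Proof.
move=> [A [B H]] cx cy e; have [_ ->] := H x cx; have [_ ->] := H y cy; by rewrite e.
Qed.

End PRsec.


Section Emb.
Variable R : realType.
Local Notation C := (complex R).
Variable n : nat.
Variable adj : rel 'I_n.
Hypothesis adj_sym : forall i j, adj i j = adj j i.
Hypothesis adj_irr : forall i, adj i i = false.
Variable v : 'I_n.
Hypothesis hv : universal_vertex adj v.
Variables c d : 'I_n.
Hypotheses (cv : c != v) (dv : d != v) (acd : adj c d).
Hypothesis connv : forall i, i != v -> connect (e' adj v) c i.
Variables (r : nat) (U : 'I_r -> 'M[int]_n).
Hypothesis hU : lattice_basis adj U.

Local Notation Phi := (@Phi_G R n adj r U).

Lemma adj_neq p q : adj p q -> p != q.
Proof. by move=> h; apply/eqP => e; rewrite e adj_irr in h. Qed.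

Lemma avj w : w != v -> adj w v.
Proof. by move=> wv; rewrite adj_sym; exact: hv. Qed.

Definition Y (x : 'I_n -> C) p := (x p - x v)^-1.
Definition eps (p q : 'I_n) : C := if (p < q)%N then 1 else -1.
Definition sig a b := eps a b / (eps a v * eps b v).

Lemma eps_ne0 p q : eps p q != 0.
Proof. by rewrite /eps; case: ifP => _; rewrite ?oppr_eq0 oner_neq0. Qed.

Lemma sig_ne0 a b : sig a b != 0.
Proof. by rewrite /sig mulf_neq0 ?invr_eq0 ?mulf_neq0 ?eps_ne0. Qed.

Lemma utilde_Em (x : 'I_n -> C) p q : adj p q ->
  utilde adj (Em p q) x = eps p q * (x p - x q).
Proof.
move=> apq; have pq := adj_neq apq; rewrite /Em /eps; case: ifP => h.
  by rewrite utilde_delta ?mul1r // /is_edge h apq.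
have qp : (q < p)%N by move: (neq_ord pq); rewrite h.
rewrite utilde_delta; first by ring.
by rewrite /is_edge qp adj_sym apq.
Qed.

Lemma Ydiff (x : 'I_n -> C) p q : conf x -> p != v -> q != v ->
  Y x p - Y x q = (x q - x p) / ((x p - x v) * (x q - x v)).
Proof. move=> cx pv qv; rewrite /Y; field; nz; exact: conf_ne. Qed.

Lemma Yne (x : 'I_n -> C) p q : conf x -> p != v -> q != v -> p != q -> Y x p - Y x q != 0.
Proof.
move=> cx pv qv pq; rewrite Ydiff // mulf_neq0 ?invr_eq0 ?mulf_neq0 ?conf_ne //.
by rewrite eq_sym.
Qed.

Lemma utilde_h (x : 'I_n -> C) a b : conf x -> adj a b -> a != v -> b != v ->
  utilde adj (hm v a b) x = sig a b * (Y x b - Y x a).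
Proof.
move=> cx aab av bv; rewrite /hm !utildeB // !utilde_Em //; try exact: avj.
have := eps_ne0 a b; have := eps_ne0 a v; have := eps_ne0 b v.
have := conf_ne cx av; have := conf_ne cx bv; have := conf_ne cx (adj_neq aab).
rewrite /sig /Y => *; field; nz.
Qed.

Lemma Ene (x : 'I_n -> C) : conf x -> Y x d - Y x c != 0.
Proof. move=> cx; apply: Yne => //; rewrite eq_sym; exact: adj_neq. Qed.

Lemma PR_D a b : adj a b -> a != v -> b != v ->
  PR adj U (fun x => (Y x b - Y x a) / (Y x d - Y x c)).
Proof.
move=> aab av bv.
have hl := in_Lambda_h adj_sym hv aab av bv (adj_neq aab) acd cv dv (adj_neq acd).
apply: PR_ext (PR_mul (PR_C adj U (sig c d / sig a b)) (PR_utilde R hU hl)) => x cx.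
rewrite utildeB // !utilde_h //.
have := sig_ne0 a b; have := sig_ne0 c d; have := Ene cx.
move=> *; field; nz.
Qed.

Definition N p (x : 'I_n -> C) := (Y x p - Y x c) / (Y x d - Y x c).

Lemma PR_N p : p != v -> PR adj U (N p).
Proof.
move=> pv; have /connectP [s pth ->] := connv pv.
suff gen : forall a s, path (e' adj v) a s -> PR adj U (N a) -> PR adj U (N (last a s)).
  apply: gen pth _; apply: PR_ext (PR_C adj U 0) => x _; by rewrite /N subrr mul0r.
move=> a s'; elim: s' a => [|z s' IH] a //= /andP[eaz pth'] Na.
apply: IH pth' _; case/and3P: eaz => aaz av zv.
apply: PR_ext (PR_add Na (PR_D aaz av zv)) => x _.
by rewrite /N -mulrDl; congr (_ * _); ring.
Qed.

Lemma Ndiff (x : 'I_n -> C) p q : conf x -> p != v -> q != v ->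
  N p x - N q x = (x q - x p) / ((x p - x v) * (x q - x v)) / (Y x d - Y x c).
Proof. by move=> cx pv qv; rewrite /N -mulrBl; congr (_ * _); rewrite -Ydiff //; ring. Qed.

Lemma Nne (x : 'I_n -> C) p q : conf x -> p != v -> q != v -> p != q -> N p x - N q x != 0.
Proof.
move=> cx pv qv pq; rewrite Ndiff // mulf_neq0 ?invr_eq0 ?Ene //.
by rewrite mulf_neq0 ?invr_eq0 ?mulf_neq0 ?conf_ne // eq_sym.
Qed.

Lemma conf_ne2 (x : 'I_n -> C) p q : conf x -> p != q -> (x p - x q != 0) /\ (x q - x p != 0).
Proof. by move=> cx pq; split; apply: conf_ne => //; rewrite eq_sym. Qed.

Lemma PR_CR i j k l : distinct4 i j k l -> PR adj U (fun x : 'I_n -> C => cross_ratio x i j k l).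
Proof.
case/andP=> ij /andP[ik /andP[il /andP[jk /andP[jl kl]]]].
have Q p q : p != v -> q != v -> p != q ->
    PR adj U (fun x => N p x - N q x) /\ (forall x, conf x -> N p x - N q x != 0).
  move=> pv qv pq; split; first exact: PR_add (PR_N pv) (PR_opp (PR_N qv)).
  by move=> x cx; exact: Nne.
have sy (p q : 'I_n) : p != q -> q != p by move=> h; rewrite eq_sym.
case: (eqVneq l v) => [lv|lv].
  subst l.
  apply: (PR_ext _ (PR_div (proj1 (Q k i kl il (sy _ _ ik))) (proj1 (Q k j kl jl (sy _ _ jk)))
     (proj2 (Q k j kl jl (sy _ _ jk))))) => x cx.
  rewrite !Ndiff // /cross_ratio.
  have [? ?] := conf_ne2 cx ij; have [? ?] := conf_ne2 cx ik; have [? ?] := conf_ne2 cx il.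
  have [? ?] := conf_ne2 cx jk; have [? ?] := conf_ne2 cx jl; have [? ?] := conf_ne2 cx kl.
  move: (Ene cx); move: (Y x d - Y x c) => E E0; field; nz.
case: (eqVneq k v) => [kv|kv].
  subst k.
  apply: (PR_ext _ (PR_div (proj1 (Q l j lv jk (sy _ _ jl))) (proj1 (Q l i lv ik (sy _ _ il)))
     (proj2 (Q l i lv ik (sy _ _ il))))) => x cx.
  rewrite !Ndiff // /cross_ratio.
  have [? ?] := conf_ne2 cx ij; have [? ?] := conf_ne2 cx ik; have [? ?] := conf_ne2 cx il.
  have [? ?] := conf_ne2 cx jk; have [? ?] := conf_ne2 cx jl; have [? ?] := conf_ne2 cx kl.
  move: (Ene cx); move: (Y x d - Y x c) => E E0; field; nz.
case: (eqVneq j v) => [jv|jv].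
  subst j.
  apply: (PR_ext _ (PR_div (proj1 (Q k i kv ij (sy _ _ ik))) (proj1 (Q l i lv ij (sy _ _ il)))
     (proj2 (Q l i lv ij (sy _ _ il))))) => x cx.
  rewrite !Ndiff // /cross_ratio.
  have [? ?] := conf_ne2 cx ij; have [? ?] := conf_ne2 cx ik; have [? ?] := conf_ne2 cx il.
  have [? ?] := conf_ne2 cx jk; have [? ?] := conf_ne2 cx jl; have [? ?] := conf_ne2 cx kl.
  move: (Ene cx); move: (Y x d - Y x c) => E E0; field; nz.
case: (eqVneq i v) => [iv|iv].
  subst i.
  apply: (PR_ext _ (PR_div (proj1 (Q l j lv jv (sy _ _ jl))) (proj1 (Q k j kv jv (sy _ _ jk)))
     (proj2 (Q k j kv jv (sy _ _ jk))))) => x cx.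
  rewrite !Ndiff // /cross_ratio.
  have [? ?] := conf_ne2 cx ij; have [? ?] := conf_ne2 cx ik; have [? ?] := conf_ne2 cx il.
  have [? ?] := conf_ne2 cx jk; have [? ?] := conf_ne2 cx jl; have [? ?] := conf_ne2 cx kl.
  move: (Ene cx); move: (Y x d - Y x c) => E E0; field; nz.
have [Pik nik] := Q i k iv kv ik; have [Pjl njl] := Q j l jv lv jl.
have [Pil nil0] := Q i l iv lv il; have [Pjk njk] := Q j k jv kv jk.
have nd : forall x, conf x -> (N i x - N l x) * (N j x - N k x) != 0.
  by move=> x cx; rewrite mulf_neq0 ?nil0 ?njk.
apply: (PR_ext _ (PR_div (PR_mul Pik Pjl) (PR_mul Pil Pjk) nd)) => x cx.
rewrite !Ndiff // /cross_ratio.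
have [? ?] := conf_ne2 cx ij; have [? ?] := conf_ne2 cx ik; have [? ?] := conf_ne2 cx il.
have [? ?] := conf_ne2 cx jk; have [? ?] := conf_ne2 cx jl; have [? ?] := conf_ne2 cx kl.
have [? ?] := conf_ne2 cx iv; have [? ?] := conf_ne2 cx jv.
have [? ?] := conf_ne2 cx kv; have [? ?] := conf_ne2 cx lv.
move: (Ene cx); move: (Y x d - Y x c) => E E0; field; nz.
Qed.

Lemma inj_Phi (x y : 'I_n -> C) : conf x -> conf y -> Phi x = Phi y -> same_orbit x y.
Proof.
move=> cx cy e.
have hN p : p != v -> N p x = N p y by move=> pv; exact: PR_eq (PR_N pv) cx cy e.
have [lam [mu [l0 hY]]] : exists lam mu : C, lam != 0 /\
    forall p, p != v -> Y y p = lam * Y x p + mu.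
  exists ((Y y d - Y y c)/(Y x d - Y x c)), (Y y c - (Y y d - Y y c)/(Y x d - Y x c) * Y x c).
  split; first by rewrite mulf_neq0 ?invr_eq0 ?Ene.
  move=> p pv; move: (hN p pv); rewrite /N; move: (Ene cx) (Ene cy).
  move: (Y x d - Y x c) (Y y d - Y y c) => Ex Ey Ex0 Ey0 h.
  have -> : Y y p = Y y c + Ey * ((Y y p - Y y c)/Ey) by field.
  by rewrite -h; field; nz.
exists (1 + mu * y v), (lam * y v - x v - mu * x v * y v), mu, (lam - mu * x v).
split; first by have -> : (1 + mu * y v) * (lam - mu * x v) - (lam * y v - x v - mu * x v * y v) * mu = lam by ring.
move=> p; case: (eqVneq p v) => [->|pv].
  have -> : mu * x v + (lam - mu * x v) = lam by ring.
  by split => //; field.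
have := hY p pv; rewrite /Y => h.
have u0 := conf_ne cx pv; have w0 := conf_ne cy pv.
have hl : lam = ((y p - y v)^-1 - mu) * (x p - x v) by rewrite h; field.
have hd : mu * x p + (lam - mu * x v) = (x p - x v) / (y p - y v) by rewrite hl; field.
rewrite hd; split; first by rewrite mulf_neq0 ?invr_eq0.
rewrite hl; field; nz.
Qed.

Lemma embed : embedding_M Phi.
Proof.
split; first exact: inj_Phi.
move=> x0 cx0.
pose Q4 := ('I_n * 'I_n * 'I_n * 'I_n)%type.
have : forall q : Q4, exists AB : {mpoly C[r]} * {mpoly C[r]}, forall x, conf x ->
    AB.2.@[Phi x] != 0 /\ (distinct4 q.1.1.1 q.1.1.2 q.1.2 q.2 ->
      cross_ratio x q.1.1.1 q.1.1.2 q.1.2 q.2 = AB.1.@[Phi x] / AB.2.@[Phi x]).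
  move=> [[[i j] k] l] /=; case: (boolP (distinct4 i j k l)) => d4.
    have [A [B H]] := PR_CR d4; exists (A, B) => x cx /=; have [b e'] := H x cx; by split.
  exists (0, 1) => x _ /=; split; first by rewrite meval1 oner_neq0.
  by [].
case/fin_all_exists => AB HAB.
exists (\prod_(q : Q4) (AB q).2),
  (fun i j k l => (AB (i, j, k, l)).1 * \prod_(q : Q4 | q != (i, j, k, l)) (AB q).2).
have mprod : forall z (P : pred Q4),
    (\prod_(q | P q) (AB q).2).@[z] = \prod_(q | P q) (AB q).2.@[z].
  by move=> z P; apply: (big_morph _ (mevalM z) (meval1 z)).
have Qn0 : forall x, conf x -> (\prod_(q : Q4) (AB q).2).@[Phi x] != 0.
  by move=> x cx; rewrite mprod; apply/prodf_neq0 => q _; have [b _] := HAB q x cx.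
split; first exact: Qn0.
move=> x cx Qx i j k l d4.
rewrite mprod (bigD1 (i, j, k, l)) //= mevalM mprod.
have [b e'] := HAB (i, j, k, l) x cx.
by rewrite (e' d4) mulrA divfK.
Qed.

End Emb.

Theorem mainTheorem14 (R : realType) (n : nat) (adj : rel 'I_n) :
  (4 <= n)%N -> (forall i j, adj i j = adj j i) -> (forall i, adj i i = false) ->
  copious R adj -> (exists v, universal_vertex adj v) ->
  topologically_copious R adj.
Proof.
move=> n4 sym irr cop [v hv] r U hU.
have [c] := exists_other n4 v v v; rewrite !inE !negb_or => /and3P[cv _ _].
have [q] := exists_other n4 v c c; rewrite !inE !negb_or => /and3P[qv qc _].
have /connectP [s pth qE] := conn sym hv cop n4 cv qv.
case: s pth qE => [|dd s] /=; first by move=> _ qE; rewrite qE eqxx in qc.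
case/andP => /and3P[acd _ dv] _ _.
apply: (embed R sym irr hv cv dv acd _ hU) => i iv.
have HH := conn sym hv cop n4 cv iv; exact HH.
Qed.
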